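(* Let $E\to M$ be a vector bundle of rank at least $n$ equipped with a pseudo-metric $\langle\cdot,\cdot\rangle$ (a nondegenerate symmetric bilinear form). Let $\widehat{u}^1,\dots,\widehat{u}^n\in\Gamma(E)$ be linearly independent over $C^\infty(M)$, and let $\widehat{Z}_1,\dots,\widehat{Z}_n$ be covariant differential operators on $E$ with symbols $\widehat{z}_1,\dots,\widehat{z}_n\in\Gamma(TM)$ satisfying $\langle\widehat{Z}_i(e_1),e_2\rangle+\langle e_1,\widehat{Z}_i(e_2)\rangle=\widehat{z}_i\langle e_1,e_2\rangle$ for all $e_1,e_2\in\Gamma(E)$ and all $i$. Define $$a_E(e)=\sum_i\langle e,\widehat{u}^i\rangle\widehat{z}_i,\quad \mathcal{D}(f)=\sum_i\widehat{z}_i(f)\,\widehat{u}^i,\quad \nabla_{e_1}e_2=\sum_i\langle e_1,\widehat{u}^i\rangle\widehat{Z}_i(e_2),\quad \Delta_{e_2}e_1=\sum_i\langle\widehat{Z}_i(e_1),e_2\rangle\widehat{u}^i,$$ $$e_1\circ e_2=\nabla_{e_1}e_2-\nabla_{e_2}e_1+\Delta_{e_2}e_1=\sum_i\Big(\langle e_1,\widehat{u}^i\rangle\widehat{Z}_i(e_2)-\langle e_2,\widehat{u}^i\rangle\widehat{Z}_i(e_1)+\langle \widehat{Z}_i(e_1),e_2\rangle\widehat{u}^i\Big).$$ Suppose there are functions $C_{ik}^j\in C^\infty(M)$ such that for all $i,j\in\{1,\dots,n\}$: $$\widehat{Z}_i(\widehat{u}^j)=\sum_k C_{ik}^j\widehat{u}^k,\qquad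 \langle\widehat{u}^i,\widehat{u}^j\rangle=0,\qquad [\widehat{Z}_i,\widehat{Z}_j]=\sum_k\big(C_{ji}^k-C_{ij}^k\big)\widehat{Z}_k.$$ Then for all $e_1,e_2,e_3\in\Gamma(E)$, $$C^\nabla(e_1,e_2)e_3=\nabla_{\Delta_{e_3}e_2}e_1=Q(e_1,e_2,e_3)=\big(\mathcal{D}\langle e_1,e_3\rangle\big)\circ e_2=0,$$ and $(E,\langle\cdot,\cdot\rangle,\circ,a_E)$ is a Courant algebroid.
   Context: A covariant differential operator on $E$ is an $\mathbb{R}$-linear map $\widehat{Z}:\Gamma(E)\to\Gamma(E)$ with a vector field $\widehat{z}$ (its symbol) such that $\widehat{Z}(fe)=f\widehat{Z}(e)+\widehat{z}(f)e$; the commutator $[\widehat{Z}_i,\widehat{Z}_j]=\widehat{Z}_i\widehat{Z}_j-\widehat{Z}_j\widehat{Z}_i$. Note $\langle\mathcal{D}(f),e\rangle=a_E(e)(f)$. The Courant curvature is $C^\nabla(e_1,e_2)=\nabla_{e_1}\nabla_{e_2}-\nabla_{e_2}\nabla_{e_1}-\nabla_{e_1\circ e_2}$ (an operator on $\Gamma(E)$), and $Q(e_1,e_2,e_3)\in\Gamma(E)$ is defined by $\langle Q(e_1,e_2,e_3),t\rangle=\langle C^\nabla(e_1,t)e_2,e_3\rangle+\langle C^\nabla(e_2,t)e_3,e_1\rangle+\langle C^\nabla(e_3,t)e_1,e_2\rangle$ for all $t\in\Gamma(E)$. A Courant algebroid $(E,\langle\cdot,\cdot\rangle,\circ,a_E)$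 consists of a pseudo-metric bundle, a bundle map $a_E:E\to TM$ and an $\mathbb{R}$-bilinear bracket $\circ$ on $\Gamma(E)$ such that (i) $a_E(e)\langle h_1,h_2\rangle=\langle e\circ h_1,h_2\rangle+\langle h_1,e\circ h_2\rangle$, (ii) $e\circ e=\tfrac12\mathcal{D}\langle e,e\rangle$ where $\langle\mathcal{D}f,e\rangle=a_E(e)(f)$, and (iii) $e_1\circ(e_2\circ e_3)=(e_1\circ e_2)\circ e_3+e_2\circ(e_1\circ e_3)$, for all sections. *)

(* Defs.v *)
(* Algebraic model of the smooth setting:
   A       = C^oo(M), a commutative R-algebra;
   V       = Gamma(E), an A-module;
   vector fields = R-linear derivations z : A -> A of A (Gamma(TM) = Der(C^oo(M)));
   g       = the pseudo-metric, an A-valued symmetric A-bilinear nondegenerate form. *)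
From HB Require Import structures.
From mathcomp Require Import all_boot all_order all_algebra.
Set Implicit Arguments. Unset Strict Implicit. Unset Printing Implicit Defensive.
Import Order.TTheory GRing.Theory Num.Theory.
Local Open Scope ring_scope.

Definition is_vector_field (R : realFieldType) (A : comAlgType R) (z : A -> A) :=
  [/\ forall f h : A, z (f + h) = z f + z h,
      forall (c : R) (f : A), z (c *: f) = c *: z f
    & forall f h : A, z (f * h) = f * z h + z f * h].

Definition is_cdo (R : realFieldType) (A : comAlgType R) (V : lmodType A)
    (Z : V -> V) (z : A -> A) :=
  [/\ is_vector_field z,
      forall e1 e2 : V, Z (e1 + e2) = Z e1 + Z e2,
      forall (c : R) (e : V), Z (c%:A *: e) = c%:A *: Z e
    & forall (f : A) (e : V), Z (f *: e) = f *: Z e + z f *: e].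

Definition pseudo_metric (R : realFieldType) (A : comAlgType R) (V : lmodType A)
    (g : V -> V -> A) :=
  [/\ forall e1 e2, g e1 e2 = g e2 e1,
      forall e1 e2 e3, g (e1 + e2) e3 = g e1 e3 + g e2 e3,
      forall (f : A) e1 e2, g (f *: e1) e2 = f * g e1 e2
    & forall e, (forall t, g e t = 0) -> e = 0].

Definition bundle_map (R : realFieldType) (A : comAlgType R) (V : lmodType A)
    (a : V -> A -> A) :=
  [/\ forall e, is_vector_field (a e),
      forall e1 e2 f, a (e1 + e2) f = a e1 f + a e2 f
    & forall (h : A) e f, a (h *: e) f = h * a e f].

Definition R_bilinear (R : realFieldType) (A : comAlgType R) (V : lmodType A)
    (br : V -> V -> V) :=
  [/\ forall e1 e2 e3, br (e1 + e2) e3 = br e1 e3 + br e2 e3,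
      forall e1 e2 e3, br e1 (e2 + e3) = br e1 e2 + br e1 e3,
      forall (c : R) e1 e2, br (c%:A *: e1) e2 = c%:A *: br e1 e2
    & forall (c : R) e1 e2, br e1 (c%:A *: e2) = c%:A *: br e1 e2].

(* Courant algebroid (E, <.,.>, o, a_E); D is the operator determined
   (uniquely, by nondegeneracy) by <D f, e> = a_E(e)(f). *)
Definition courant_algebroid (R : realFieldType) (A : comAlgType R) (V : lmodType A)
    (g : V -> V -> A) (br : V -> V -> V) (a : V -> A -> A) (D : A -> V) :=
  pseudo_metric g /\ bundle_map a /\ R_bilinear br /\
  (forall (f : A) (e : V), g (D f) e = a e f) /\
  (forall e h1 h2, a e (g h1 h2) = g (br e h1) h2 + g h1 (br e h2)) /\
  (forall e, br e e = ((2 : R)^-1)%:A *: D (g e e)) /\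
  (forall e1 e2 e3, br e1 (br e2 e3) = br (br e1 e2) e3 + br e2 (br e1 e3)).

Definition anchorE (R : realFieldType) (A : comAlgType R) (V : lmodType A) (n : nat)
    (g : V -> V -> A) (u : 'I_n -> V) (z : 'I_n -> A -> A) (e : V) (f : A) : A :=
  \sum_(i < n) g e (u i) * z i f.

Definition Dop (R : realFieldType) (A : comAlgType R) (V : lmodType A) (n : nat)
    (u : 'I_n -> V) (z : 'I_n -> A -> A) (f : A) : V :=
  \sum_(i < n) z i f *: u i.

Definition nablaE (R : realFieldType) (A : comAlgType R) (V : lmodType A) (n : nat)
    (g : V -> V -> A) (u : 'I_n -> V) (Z : 'I_n -> V -> V) (e1 e2 : V) : V :=
  \sum_(i < n) g e1 (u i) *: Z i e2.

Definition DeltaE (R : realFieldType) (A : comAlgType R) (V : lmodType A) (n : nat)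
    (g : V -> V -> A) (u : 'I_n -> V) (Z : 'I_n -> V -> V) (e2 e1 : V) : V :=
  \sum_(i < n) g (Z i e1) e2 *: u i.

Definition circE (R : realFieldType) (A : comAlgType R) (V : lmodType A) (n : nat)
    (g : V -> V -> A) (u : 'I_n -> V) (Z : 'I_n -> V -> V) (e1 e2 : V) : V :=
  nablaE g u Z e1 e2 - nablaE g u Z e2 e1 + DeltaE g u Z e2 e1.

Definition courant_curv (V : zmodType)
    (nabla : V -> V -> V) (br : V -> V -> V) (e1 e2 e3 : V) : V :=
  nabla e1 (nabla e2 e3) - nabla e2 (nabla e1 e3) - nabla (br e1 e2) e3.

(* <Q(e1,e2,e3), t> *)
Definition Q_pair (R : realFieldType) (A : comAlgType R) (V : lmodType A)
    (g : V -> V -> A) (nabla : V -> V -> V) (br : V -> V -> V) (e1 e2 e3 t : V) : A :=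
  g (courant_curv nabla br e1 t e2) e3 + g (courant_curv nabla br e2 t e3) e1
  + g (courant_curv nabla br e3 t e1) e2.

(* Main.v *)
Require Import Defs.
From HB Require Import structures.
From mathcomp Require Import all_boot all_order all_algebra.
From mathcomp Require Import ring lra.
Set Implicit Arguments. Unset Strict Implicit. Unset Printing Implicit Defensive.
Import Order.TTheory GRing.Theory Num.Theory.
Local Open Scope ring_scope.

Ltac cancel_with x := repeat first [ rewrite subrK | rewrite addrK | rewrite addNr | rewrite subrr | rewrite (addrAC _ _ x) ].
Ltac zc := apply/eqP; rewrite -subr_eq0; apply/eqP; rewrite ?(opprD, opprK, addrA);
  do 60? (match goal with |- ?S + ?x = 0 => cancel_with x end);
  rewrite ?add0r ?addr0 ?subrr ?addNr; try done.

Section Prop313.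
Variables (R : realFieldType) (A : comAlgType R) (V : lmodType A) (n : nat)
  (g : V -> V -> A) (u : 'I_n -> V) (Z : 'I_n -> V -> V) (z : 'I_n -> A -> A)
  (C : 'I_n -> 'I_n -> 'I_n -> A).
Hypothesis Hpm : pseudo_metric g.
Hypothesis Hcdo : forall i, is_cdo (Z i) (z i).
Hypothesis Hmet : forall i e1 e2, g (Z i e1) e2 + g e1 (Z i e2) = z i (g e1 e2).
Hypothesis HZu : forall i j, Z i (u j) = \sum_(k < n) C i k j *: u k.
Hypothesis Hiso : forall i j, g (u i) (u j) = 0.
Hypothesis Hcomm : forall i j e, Z i (Z j e) - Z j (Z i e) = \sum_(k < n) (C j i k - C i j k) *: Z k e.

Lemma gC e1 e2 : g e1 e2 = g e2 e1. Proof. by case: Hpm. Qed.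
Lemma gDl e1 e2 e3 : g (e1 + e2) e3 = g e1 e3 + g e2 e3. Proof. by case: Hpm. Qed.
Lemma gZl (f : A) e1 e2 : g (f *: e1) e2 = f * g e1 e2. Proof. by case: Hpm. Qed.
Lemma gDr e1 e2 e3 : g e1 (e2 + e3) = g e1 e2 + g e1 e3.
Proof. by rewrite gC gDl !(gC _ e1). Qed.
Lemma gZr (f : A) e1 e2 : g e1 (f *: e2) = f * g e1 e2.
Proof. by rewrite gC gZl gC. Qed.
Lemma g0l e : g 0 e = 0. Proof. by have := gZl 0 0 e; rewrite scale0r mul0r. Qed.
Lemma g0r e : g e 0 = 0. Proof. by rewrite gC g0l. Qed.
Lemma gNl e1 e2 : g (- e1) e2 = - g e1 e2.
Proof. by rewrite -scaleN1r gZl mulN1r. Qed.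
Lemma gNr e1 e2 : g e1 (- e2) = - g e1 e2.
Proof. by rewrite gC gNl gC. Qed.
Lemma gBl e1 e2 e3 : g (e1 - e2) e3 = g e1 e3 - g e2 e3.
Proof. by rewrite gDl gNl. Qed.
Lemma gBr e1 e2 e3 : g e1 (e2 - e3) = g e1 e2 - g e1 e3.
Proof. by rewrite gDr gNr. Qed.
Lemma gsuml (I : Type) (r : seq I) (P : pred I) (F : I -> V) e :
  g (\sum_(i <- r | P i) F i) e = \sum_(i <- r | P i) g (F i) e.
Proof. exact: (big_morph (fun x => g x e) (fun x y => gDl x y e) (g0l e)). Qed.
Lemma gsumr (I : Type) (r : seq I) (P : pred I) (F : I -> V) e :
  g e (\sum_(i <- r | P i) F i) = \sum_(i <- r | P i) g e (F i).
Proof. exact: (big_morph (fun x => g e x) (fun x y => gDr e x y) (g0r e)). Qed.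
Lemma gnd e : (forall t, g e t = 0) -> e = 0. Proof. by case: Hpm => _ _ _; apply. Qed.

Lemma zvf i : [/\ forall f h : A, z i (f + h) = z i f + z i h,
      forall (c : R) (f : A), z i (c *: f) = c *: z i f
    & forall f h : A, z i (f * h) = f * z i h + z i f * h].
Proof. by case: (Hcdo i). Qed.
Lemma zD i f h : z i (f + h) = z i f + z i h. Proof. by case: (zvf i). Qed.
Lemma zZ i (c : R) f : z i (c *: f) = c *: z i f. Proof. by case: (zvf i). Qed.
Lemma zM i f h : z i (f * h) = f * z i h + z i f * h. Proof. by case: (zvf i). Qed.
Lemma z0 i : z i 0 = 0.
Proof. by apply: (@addrI _ (z i 0)); rewrite -zD !addr0. Qed.
Lemma zN i f : z i (- f) = - z i f.
Proof. by apply/eqP; rewrite -addr_eq0 -zD addNr z0. Qed.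
Lemma zB i f h : z i (f - h) = z i f - z i h. Proof. by rewrite zD zN. Qed.
Lemma z1 i : z i 1 = 0.
Proof. by apply/eqP; have := zM i 1 1; rewrite !mul1r mulr1 -{1}(addr0 (z i 1)) => /addrI <-. Qed.
Lemma zsum i (I : Type) (r : seq I) (P : pred I) (F : I -> A) :
  z i (\sum_(k <- r | P k) F k) = \sum_(k <- r | P k) z i (F k).
Proof. exact: (big_morph (z i) (zD i) (z0 i)). Qed.

Lemma ZD i e1 e2 : Z i (e1 + e2) = Z i e1 + Z i e2. Proof. by case: (Hcdo i). Qed.
Lemma ZZ i (f : A) e : Z i (f *: e) = f *: Z i e + z i f *: e. Proof. by case: (Hcdo i). Qed.
Lemma ZR i (c : R) e : Z i (c%:A *: e) = c%:A *: Z i e. Proof. by case: (Hcdo i). Qed.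
Lemma Z0 i : Z i 0 = 0.
Proof. by apply: (@addrI _ (Z i 0)); rewrite -ZD !addr0. Qed.
Lemma ZN i e : Z i (- e) = - Z i e.
Proof. by apply/eqP; rewrite -addr_eq0 -ZD addNr Z0. Qed.
Lemma ZB i e1 e2 : Z i (e1 - e2) = Z i e1 - Z i e2. Proof. by rewrite ZD ZN. Qed.
Lemma Zsum i (I : Type) (r : seq I) (P : pred I) (F : I -> V) :
  Z i (\sum_(k <- r | P k) F k) = \sum_(k <- r | P k) Z i (F k).
Proof. exact: (big_morph (Z i) (ZD i) (Z0 i)). Qed.


Definition Zs (xi : 'I_n -> A) e := \sum_(i < n) xi i *: Z i e.
Definition br (xi eta : 'I_n -> A) k :=
  \sum_(i < n) (xi i * z i (eta k) - eta i * z i (xi k))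
  + \sum_(i < n) \sum_(j < n) xi i * eta j * (C j i k - C i j k).

Lemma ZsD xi e1 e2 : Zs xi (e1 + e2) = Zs xi e1 + Zs xi e2.
Proof. by rewrite /Zs -big_split; apply: eq_bigr => i _; rewrite ZD scalerDr. Qed.
Lemma ZsN xi e : Zs xi (- e) = - Zs xi e.
Proof. by rewrite /Zs -sumrN; apply: eq_bigr => i _; rewrite ZN scalerN. Qed.
Lemma ZsB xi e1 e2 : Zs xi (e1 - e2) = Zs xi e1 - Zs xi e2.
Proof. by rewrite ZsD ZsN. Qed.
Lemma Zs0 xi : Zs xi 0 = 0.
Proof. by rewrite /Zs big1 // => i _; rewrite Z0 scaler0. Qed.
Lemma Zssum xi (I : Type) (r : seq I) (P : pred I) (F : I -> V) :
  Zs xi (\sum_(k <- r | P k) F k) = \sum_(k <- r | P k) Zs xi (F k).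
Proof. exact: (big_morph (Zs xi) (ZsD xi) (Zs0 xi)). Qed.
Lemma Zs_leib xi (f : A) e :
  Zs xi (f *: e) = f *: Zs xi e + (\sum_(i < n) xi i * z i f) *: e.
Proof.
rewrite /Zs scaler_sumr scaler_suml -big_split; apply: eq_bigr => i _.
by rewrite ZZ scalerDr !scalerA mulrC.
Qed.

Lemma Zs_Zs xi eta e : Zs xi (Zs eta e) =
  \sum_(i < n) \sum_(j < n) (xi i * eta j) *: Z i (Z j e)
  + \sum_(j < n) (\sum_(i < n) xi i * z i (eta j)) *: Z j e.
Proof.
rewrite /Zs.
transitivity (\sum_(i < n) \sum_(j < n) ((xi i * eta j) *: Z i (Z j e)
                 + (xi i * z i (eta j)) *: Z j e)).
  apply: eq_bigr => i _; rewrite Zsum scaler_sumr; apply: eq_bigr => j _.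
  by rewrite ZZ scalerDr !scalerA.
rewrite (eq_bigr _ (fun i _ => big_split _ _ _ _ _)) big_split /=; congr (_ + _).
by rewrite exchange_big; apply: eq_bigr => j _; rewrite scaler_suml.
Qed.

Lemma Zs_comm xi eta e :
  Zs xi (Zs eta e) - Zs eta (Zs xi e) = Zs (br xi eta) e.
Proof.
rewrite !Zs_Zs.
have HP : \sum_(i < n) \sum_(j < n) (xi i * eta j) *: Z i (Z j e)
   - \sum_(i < n) \sum_(j < n) (eta i * xi j) *: Z i (Z j e)
   = \sum_(k < n) (\sum_(i < n) \sum_(j < n) xi i * eta j * (C j i k - C i j k)) *: Z k e.
  rewrite [X in _ - X]exchange_big -sumrB.
  transitivity (\sum_(i < n) \sum_(j < n) \sum_(k < n)
                   (xi i * eta j * (C j i k - C i j k)) *: Z k e).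
    apply: eq_bigr => i _; rewrite -sumrB; apply: eq_bigr => j _.
    by rewrite (mulrC (eta j)) -scalerBr Hcomm scaler_sumr; apply: eq_bigr => k _; rewrite scalerA.
  symmetry; under eq_bigr do rewrite scaler_suml.
  rewrite exchange_big; apply: eq_bigr => i _.
  by under eq_bigr do rewrite scaler_suml; rewrite exchange_big.
have HQ : \sum_(j < n) (\sum_(i < n) xi i * z i (eta j)) *: Z j e
   - \sum_(j < n) (\sum_(i < n) eta i * z i (xi j)) *: Z j e
   = \sum_(k < n) (\sum_(i < n) (xi i * z i (eta k) - eta i * z i (xi k))) *: Z k e.
  by rewrite -sumrB; apply: eq_bigr => k _; rewrite -scalerBl -sumrB.
rewrite [RHS]/Zs /br (eq_bigr _ (fun k _ => scalerDl _ _ _)).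
rewrite big_split /= -HP -HQ.
by rewrite opprD addrACA addrC.
Qed.


Definition a e i := g e (u i).

Lemma F1 i e j : g (Z i e) (u j) = z i (a e j) - \sum_(k < n) C i k j * a e k.
Proof.
rewrite /a -(Hmet i e (u j)) HZu gsumr.
by rewrite (eq_bigr _ (fun k _ => gZr _ _ _)) addrK.
Qed.

Lemma aDelta e2 e1 k : a (DeltaE g u Z e2 e1) k = 0.
Proof.
rewrite /a /DeltaE gsuml big1 // => i _; by rewrite gZl Hiso mulr0.
Qed.

Lemma g_N e e' k : g (nablaE g u Z e e') (u k) =
  \sum_(i < n) a e i * (z i (a e' k) - \sum_(j < n) C i j k * a e' j).
Proof. by rewrite /nablaE gsuml; apply: eq_bigr => i _; rewrite gZl F1. Qed.

Lemma a_circ e1 e2 k : a (circE g u Z e1 e2) k = br (a e1) (a e2) k.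
Proof.
rewrite {1}/a /circE gDl gBl !g_N -/(a _ k) aDelta addr0 /br.
set xi := a e1; set eta := a e2.
transitivity (\sum_(i < n) (xi i * z i (eta k) - eta i * z i (xi k))
  + \sum_(i < n) (eta i * \sum_(j < n) C i j k * xi j - xi i * \sum_(j < n) C i j k * eta j)).
  by rewrite -sumrB -big_split; apply: eq_bigr => i _ /=; ring.
congr (_ + _).
rewrite sumrB; under eq_bigr do rewrite mulr_sumr.
under [X in _ - X]eq_bigr do rewrite mulr_sumr.
rewrite [X in X - _]exchange_big -sumrB; apply: eq_bigr => i _; rewrite -sumrB; apply: eq_bigr => j _ /=.
ring.
Qed.

Lemma curv0 e1 e2 e3 : courant_curv (nablaE g u Z) (circE g u Z) e1 e2 e3 = 0.
Proof.
rewrite /courant_curv.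
change (Zs (a e1) (Zs (a e2) e3) - Zs (a e2) (Zs (a e1) e3)
        - Zs (a (circE g u Z e1 e2)) e3 = 0).
rewrite Zs_comm /Zs -sumrB big1 // => k _.
by rewrite a_circ subrr.
Qed.


Definition W_def x y t := g x t *: y - g y t *: x.
Fact W_key : unit. Proof. exact: tt. Qed.
Definition W := locked_with W_key W_def.
Lemma WE : W = W_def. Proof. by rewrite /W; case: W_key. Qed.
Definition T e t := \sum_(i < n) W (u i) (Z i e) t.

Lemma circ_NT e e' : circE g u Z e e' = nablaE g u Z e e' - T e e'.
Proof.
rewrite /circE /T WE /W_def sumrB.
have -> : nablaE g u Z e' e = \sum_(i < n) g (u i) e' *: Z i e.
  by rewrite /nablaE; apply: eq_bigr => i _; rewrite gC.
by rewrite /DeltaE; zc.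
Qed.

Lemma WDl x1 x2 y t : W (x1 + x2) y t = W x1 y t + W x2 y t.
Proof. by rewrite WE /W_def gDl scalerDl scalerDr; zc. Qed.
Lemma WZl (f : A) x y t : W (f *: x) y t = f *: W x y t.
Proof. by rewrite WE /W_def gZl scalerBr !scalerA (mulrC (g y t)). Qed.
Lemma W0l y t : W 0 y t = 0.
Proof. by rewrite WE /W_def g0l scale0r scaler0 subrr. Qed.
Lemma Wsuml (I : Type) (r : seq I) (P : pred I) (F : I -> V) y t :
  W (\sum_(k <- r | P k) F k) y t = \sum_(k <- r | P k) W (F k) y t.
Proof. exact: (big_morph (fun x => W x y t) (fun a b => WDl a b y t) (W0l y t)). Qed.
Lemma WDr x y1 y2 t : W x (y1 + y2) t = W x y1 t + W x y2 t.
Proof. by rewrite WE /W_def gDl scalerDl scalerDr; zc. Qed.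
Lemma WZr (f : A) x y t : W x (f *: y) t = f *: W x y t.
Proof. by rewrite WE /W_def gZl scalerBr !scalerA (mulrC (g x t)). Qed.
Lemma W0r x t : W x 0 t = 0.
Proof. by rewrite WE /W_def g0l scale0r scaler0 subrr. Qed.
Lemma WNr x y t : W x (- y) t = - W x y t.
Proof. by rewrite -scaleN1r WZr scaleN1r. Qed.
Lemma WBr x y1 y2 t : W x (y1 - y2) t = W x y1 t - W x y2 t.
Proof. by rewrite WDr WNr. Qed.
Lemma WNl x y t : W (- x) y t = - W x y t.
Proof. by rewrite -scaleN1r WZl scaleN1r. Qed.
Lemma WBl x1 x2 y t : W (x1 - x2) y t = W x1 y t - W x2 y t.
Proof. by rewrite WDl WNl. Qed.
Lemma Wsumr (I : Type) (r : seq I) (P : pred I) (F : I -> V) x t :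
  W x (\sum_(k <- r | P k) F k) t = \sum_(k <- r | P k) W x (F k) t.
Proof. exact: (big_morph (fun y => W x y t) (fun a b => WDr x a b t) (W0r x t)). Qed.
Lemma WC x y t : W x y t = - W y x t.
Proof. by rewrite WE /W_def opprB. Qed.
Lemma WDt x y t1 t2 : W x y (t1 + t2) = W x y t1 + W x y t2.
Proof. by rewrite WE /W_def !gDr !scalerDl; zc. Qed.
Lemma WZt (f : A) x y t : W x y (f *: t) = f *: W x y t.
Proof. by rewrite WE /W_def !gZr scalerBr !scalerA. Qed.
Lemma W0t x y : W x y 0 = 0.
Proof. by rewrite WE /W_def !g0r !scale0r subrr. Qed.
Lemma Wsumt (I : Type) (r : seq I) (P : pred I) (F : I -> V) x y :
  W x y (\sum_(k <- r | P k) F k) = \sum_(k <- r | P k) W x y (F k).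
Proof. exact: (big_morph (fun t => W x y t) (fun a b => WDt x y a b) (W0t x y)). Qed.
Lemma gW x y t q : g (W x y t) q = g x t * g y q - g y t * g x q.
Proof. by rewrite WE /W_def gBl !gZl. Qed.

Lemma TDt e t1 t2 : T e (t1 + t2) = T e t1 + T e t2.
Proof. by rewrite /T -big_split; apply: eq_bigr => i _; rewrite WDt. Qed.
Lemma TZt e (f : A) t : T e (f *: t) = f *: T e t.
Proof. by rewrite /T scaler_sumr; apply: eq_bigr => i _; rewrite WZt. Qed.
Lemma T0t e : T e 0 = 0.
Proof. by rewrite /T big1 // => i _; rewrite W0t. Qed.
Lemma TNt e t : T e (- t) = - T e t.
Proof. by rewrite -scaleN1r TZt scaleN1r. Qed.
Lemma TBt e t1 t2 : T e (t1 - t2) = T e t1 - T e t2.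
Proof. by rewrite TDt TNt. Qed.
Lemma Tsumt e (I : Type) (r : seq I) (P : pred I) (F : I -> V) :
  T e (\sum_(k <- r | P k) F k) = \sum_(k <- r | P k) T e (F k).
Proof. exact: (big_morph (T e) (TDt e) (T0t e)). Qed.
Lemma gT e p q : g (T e p) q = - g p (T e q).
Proof.
rewrite /T gsuml gsumr -sumrN; apply: eq_bigr => i _.
rewrite gW (gC p) gW. ring.
Qed.
Lemma gTr e p q : g p (T e q) = - g (T e p) q.
Proof. by rewrite gT opprK. Qed.

Lemma Zs_met xi p q :
  \sum_(i < n) xi i * z i (g p q) = g (Zs xi p) q + g p (Zs xi q).
Proof.
rewrite /Zs gsuml gsumr -big_split; apply: eq_bigr => i _.
by rewrite /= gZl gZr -mulrDr Hmet.
Qed.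

Lemma ZsW xi x y t :
  Zs xi (W x y t) = W (Zs xi x) y t + W x (Zs xi y) t + W x y (Zs xi t).
Proof. by rewrite WE /W_def ZsB !Zs_leib !Zs_met !scalerDl; zc. Qed.

Lemma TW e x y t :
  T e (W x y t) = W (T e x) y t + W x (T e y) t + W x y (T e t).
Proof. by rewrite WE /W_def TBt !TZt !gTr !scaleNr; zc. Qed.


Lemma ZiZs i xi e : Z i (Zs xi e) = Zs xi (Z i e)
  + \sum_(k < n) (z i (xi k) + \sum_(j < n) xi j * (C j i k - C i j k)) *: Z k e.
Proof.
have HB : \sum_(j < n) xi j *: (Z i (Z j e) - Z j (Z i e))
        = \sum_(k < n) (\sum_(j < n) xi j * (C j i k - C i j k)) *: Z k e.
  under eq_bigr do rewrite Hcomm scaler_sumr.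
  rewrite exchange_big; apply: eq_bigr => k _; rewrite scaler_suml.
  by apply: eq_bigr => j _; rewrite scalerA.
rewrite /Zs Zsum.
transitivity (\sum_(j < n) (xi j *: Z j (Z i e) + xi j *: (Z i (Z j e) - Z j (Z i e))
               + z i (xi j) *: Z j e)).
  by apply: eq_bigr => j _; rewrite ZZ scalerBr; zc.
rewrite !big_split /= HB (eq_bigr _ (fun k _ => scalerDl _ _ _)) big_split /=.
zc.
Qed.

Lemma ZiN i e e' : Z i (nablaE g u Z e e') = nablaE g u Z e (Z i e')
  + \sum_(k < n) (z i (a e k) + \sum_(j < n) a e j * (C j i k - C i j k)) *: Z k e'.
Proof. exact: (ZiZs i (a e) e'). Qed.

Lemma NT e e' t : nablaE g u Z e (T e' t) - T e' (nablaE g u Z e t)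
  = \sum_(i < n) (W (nablaE g u Z e (u i)) (Z i e') t + W (u i) (nablaE g u Z e (Z i e')) t).
Proof.
change (Zs (a e) (T e' t) - T e' (Zs (a e) t)
  = \sum_(i < n) (W (Zs (a e) (u i)) (Z i e') t + W (u i) (Zs (a e) (Z i e')) t)).
rewrite /T Zssum -sumrB; apply: eq_bigr => i _; rewrite ZsW; zc.
Qed.

Lemma TTc e e' t : T e (T e' t) - T e' (T e t)
  = \sum_(i < n) (W (T e (u i)) (Z i e') t + W (u i) (T e (Z i e')) t).
Proof.
have -> : T e' (T e t) = \sum_(i < n) W (u i) (Z i e') (T e t) by [].
have -> : T e (T e' t) = T e (\sum_(i < n) W (u i) (Z i e') t) by [].
rewrite Tsumt -sumrB; apply: eq_bigr => i _; rewrite TW; zc.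
Qed.

Lemma Tu e p : T e (u p) = - \sum_(j < n) g (Z j e) (u p) *: u j.
Proof.
rewrite /T WE /W_def -sumrN; apply: eq_bigr => j _.
by rewrite Hiso scale0r add0r.
Qed.

Lemma Nu e p : nablaE g u Z e (u p) = \sum_(k < n) (\sum_(j < n) a e j * C j k p) *: u k.
Proof.
rewrite /nablaE; under eq_bigr do rewrite HZu scaler_sumr.
rewrite exchange_big; apply: eq_bigr => k _; rewrite scaler_suml.
by apply: eq_bigr => j _; rewrite scalerA.
Qed.


Lemma G2 e e' t :
  \sum_(p < n) W (u p) (\sum_(q < n) (z p (a e q)
      + \sum_(j < n) a e j * (C j p q - C p j q)) *: Z q e') t
  = \sum_(p < n) W (nablaE g u Z e (u p)) (Z p e') t
    - \sum_(p < n) W (T e (u p)) (Z p e') t.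
Proof.
transitivity (\sum_(p < n) \sum_(q < n)
   ((\sum_(j < n) a e j * C j p q) + g (Z p e) (u q)) *: W (u p) (Z q e') t).
  apply: eq_bigr => p _; rewrite Wsumr; apply: eq_bigr => q _; rewrite WZr.
  congr (_ *: _); rewrite F1.
  have -> : \sum_(k < n) C p k q * a e k = \sum_(j < n) a e j * C p j q.
    by apply: eq_bigr => k _; rewrite mulrC.
  under eq_bigr do rewrite mulrBr.
  rewrite sumrB; ring.
rewrite (eq_bigr (fun p => \sum_(q < n) (\sum_(j < n) a e j * C j p q) *: W (u p) (Z q e') t
   + \sum_(q < n) g (Z p e) (u q) *: W (u p) (Z q e') t)); last first.
  by move=> p _; rewrite -big_split; apply: eq_bigr => q _; rewrite scalerDl.
rewrite big_split /=; congr (_ + _).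
  symmetry; under eq_bigr do rewrite Nu Wsuml.
  rewrite exchange_big; apply: eq_bigr => p _; apply: eq_bigr => q _.
  by rewrite WZl.
symmetry; rewrite -sumrN.
transitivity (\sum_(p < n) \sum_(j < n) g (Z j e) (u p) *: W (u j) (Z p e') t).
  by apply: eq_bigr => p _; rewrite Tu WNl opprK Wsuml; apply: eq_bigr => j _; rewrite WZl.
by rewrite exchange_big.
Qed.

Lemma Tswap e1 e2 t :
  - \sum_(p < n) W (T e2 (u p)) (Z p e1) t
  = \sum_(p < n) W (u p) (\sum_(j < n) g (u j) (Z p e2) *: Z j e1) t.
Proof.
under eq_bigr do rewrite Tu WNl Wsuml.
rewrite sumrN opprK exchange_big; apply: eq_bigr => p _.
rewrite Wsumr; apply: eq_bigr => j _.
by rewrite WZl WZr gC.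
Qed.

Lemma WZU (h : 'I_n -> A) t :
  \sum_(i < n) W (u i) (Z i (\sum_(j < n) h j *: u j)) t
  = \sum_(i < n) \sum_(j < n) (\sum_(k < n) C i j k * h k + z i (h j)) *: W (u i) (u j) t.
Proof.
apply: eq_bigr => i _; rewrite Zsum Wsumr.
transitivity (\sum_(j < n) (h j *: \sum_(k < n) C i k j *: W (u i) (u k) t
                            + z i (h j) *: W (u i) (u j) t)).
  apply: eq_bigr => j _; rewrite ZZ HZu WDr !WZr Wsumr; congr (_ *: _ + _).
  by apply: eq_bigr => k _; rewrite WZr.
rewrite big_split /= (eq_bigr _ (fun j _ => scalerDl _ _ _)) big_split /=.
congr (_ + _).
under eq_bigr do rewrite scaler_sumr.
rewrite exchange_big; apply: eq_bigr => j _; rewrite scaler_suml.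
by apply: eq_bigr => k _; rewrite scalerA mulrC.
Qed.

Lemma half : ((2 : R)^-1 + 2^-1 = 1)%R.
Proof. lra. Qed.

Lemma halfA (x : A) : ((2 : R)^-1)%:A * (x + x) = x.
Proof. by rewrite mulrDr -mulrDl -scalerDl half scale1r mul1r. Qed.

Lemma two_zero (x : V) : x + x = 0 -> x = 0.
Proof.
move=> H.
have <- : ((2 : R)^-1)%:A *: (x + x) = x.
  by rewrite scalerDr -scalerDl -scalerDl half !scale1r.
by rewrite H scaler0.
Qed.

Lemma antisym (s : 'I_n -> 'I_n -> A) (w : 'I_n -> 'I_n -> V) :
  (forall i j, w i j = - w j i) -> (forall i j, (s i j - s j i) *: w i j = 0) ->
  \sum_(i < n) \sum_(j < n) s i j *: w i j = 0.
Proof.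
move=> Hw Hs; apply: two_zero.
have E : \sum_(i < n) \sum_(j < n) s i j *: w i j
       = - \sum_(i < n) \sum_(j < n) s i j *: w i j.
  transitivity (\sum_(i < n) \sum_(j < n) s j i *: w i j).
    apply: eq_bigr => i _; apply: eq_bigr => j _.
    by apply/eqP; rewrite -subr_eq0 -scalerBl Hs.
  rewrite exchange_big -sumrN; apply: eq_bigr => i _; rewrite -sumrN.
  by apply: eq_bigr => j _; rewrite (Hw j i) scalerN.
by rewrite {1}E addNr.
Qed.

Lemma UU e1 e2 t :
  \sum_(i < n) W (u i) (Z i (DeltaE g u Z e2 e1)) t
  = \sum_(i < n) W (u i) (\sum_(j < n) g (Z j e1) (Z i e2) *: u j) t.
Proof.
rewrite /DeltaE WZU.
have -> : \sum_(i < n) W (u i) (\sum_(j < n) g (Z j e1) (Z i e2) *: u j) t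
  = \sum_(i < n) \sum_(j < n) g (Z j e1) (Z i e2) *: W (u i) (u j) t.
  by apply: eq_bigr => i _; rewrite Wsumr; apply: eq_bigr => j _; rewrite WZr.
apply/eqP; rewrite -subr_eq0; apply/eqP.
rewrite -sumrB; under eq_bigr do rewrite -sumrB.
under eq_bigr do under eq_bigr do rewrite -scalerBl.
apply: antisym => [i j|i j]; first exact: WC.
rewrite -!Hmet !addrA !addrK.
have Hg : g (Z i (Z j e1)) e2 - g (Z j (Z i e1)) e2
   = \sum_(k < n) (C j i k - C i j k) * g (Z k e1) e2.
  by rewrite -gBl Hcomm gsuml; apply: eq_bigr => k _; rewrite gZl.
rewrite opprD addrACA Hg -sumrB -big_split /= big1 ?scale0r // => k _.
ring.
Qed.


Lemma HT e1 e2 i : T e1 (Z i e2) = \sum_(j < n) g (u j) (Z i e2) *: Z j e1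
                              - \sum_(j < n) g (Z j e1) (Z i e2) *: u j.
Proof. by rewrite /T WE /W_def sumrB. Qed.

Lemma Tid e1 e2 e3 :
  T (circE g u Z e1 e2) e3
  = (nablaE g u Z e1 (T e2 e3) - T e2 (nablaE g u Z e1 e3))
    - (nablaE g u Z e2 (T e1 e3) - T e1 (nablaE g u Z e2 e3))
    - (T e1 (T e2 e3) - T e2 (T e1 e3)).
Proof.
rewrite NT NT TTc.
have HTT : \sum_(i < n) (W (T e1 (u i)) (Z i e2) e3 + W (u i) (T e1 (Z i e2)) e3)
  = \sum_(i < n) (W (T e1 (u i)) (Z i e2) e3
      + (W (u i) (\sum_(j < n) g (u j) (Z i e2) *: Z j e1) e3
         - W (u i) (\sum_(j < n) g (Z j e1) (Z i e2) *: u j) e3)).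
  by apply: eq_bigr => i _; rewrite HT WBr.
rewrite HTT {1}/T.
rewrite (eq_bigr (fun i => W (u i) (nablaE g u Z e1 (Z i e2)) e3
    + W (u i) (\sum_(k < n) (z i (a e1 k) + \sum_(j < n) a e1 j * (C j i k - C i j k)) *: Z k e2) e3
    - (W (u i) (nablaE g u Z e2 (Z i e1)) e3
    + W (u i) (\sum_(k < n) (z i (a e2 k) + \sum_(j < n) a e2 j * (C j i k - C i j k)) *: Z k e1) e3)
    + W (u i) (Z i (DeltaE g u Z e2 e1)) e3)); last first.
  by move=> i _; rewrite /circE ZD ZB ZiN ZiN WDr WBr !WDr.
rewrite !(big_split, sumrB, sumrN) /=.
rewrite G2 G2 UU -Tswap.
zc.
Qed.

Lemma NB e x y : nablaE g u Z e (x - y) = nablaE g u Z e x - nablaE g u Z e y.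
Proof. exact: (ZsB (a e) x y). Qed.

Lemma jacobi e1 e2 e3 :
  circE g u Z e1 (circE g u Z e2 e3)
  = circE g u Z (circE g u Z e1 e2) e3 + circE g u Z e2 (circE g u Z e1 e3).
Proof.
have E1 : circE g u Z e1 (circE g u Z e2 e3)
  = nablaE g u Z e1 (nablaE g u Z e2 e3) - nablaE g u Z e1 (T e2 e3)
    - T e1 (nablaE g u Z e2 e3) + T e1 (T e2 e3).
  by rewrite [circE g u Z e2 e3]circ_NT circ_NT NB TBt; zc.
have E3 : circE g u Z e2 (circE g u Z e1 e3)
  = nablaE g u Z e2 (nablaE g u Z e1 e3) - nablaE g u Z e2 (T e1 e3)
    - T e2 (nablaE g u Z e1 e3) + T e2 (T e1 e3).
  by rewrite [circE g u Z e1 e3]circ_NT circ_NT NB TBt; zc.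
have Hc : nablaE g u Z (circE g u Z e1 e2) e3
        = nablaE g u Z e1 (nablaE g u Z e2 e3) - nablaE g u Z e2 (nablaE g u Z e1 e3).
  by move/eqP: (curv0 e1 e2 e3); rewrite /courant_curv subr_eq0 => /eqP.
rewrite E1 E3 (circ_NT (circE g u Z e1 e2) e3) Hc Tid.
zc.
Qed.

Lemma zcomm i j (f : A) (e : V) :
  (z i (z j f) - z j (z i f) - \sum_(k < n) (C j i k - C i j k) * z k f) *: e = 0.
Proof.
have H1 := Hcomm i j (f *: e).
have E : \sum_(k < n) (C j i k - C i j k) *: Z k (f *: e)
  = f *: (\sum_(k < n) (C j i k - C i j k) *: Z k e)
    + (\sum_(k < n) (C j i k - C i j k) * z k f) *: e.
  rewrite scaler_sumr scaler_suml -big_split; apply: eq_bigr => k _ /=.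
  by rewrite ZZ scalerDr !scalerA mulrC.
rewrite E -Hcomm !ZZ !ZD !ZZ in H1.
have H2 : (f *: Z i (Z j e) + z i f *: Z j e + (z j f *: Z i e + z i (z j f) *: e)
   - (f *: Z j (Z i e) + z j f *: Z i e + (z i f *: Z j e + z j (z i f) *: e)))
   - (f *: (Z i (Z j e) - Z j (Z i e)) + (\sum_(k < n) (C j i k - C i j k) * z k f) *: e) = 0.
  by rewrite H1 subrr.
rewrite -H2 !scalerBl scalerBr; zc.
Qed.

Lemma N_iso x y : (forall i, g x (u i) = 0) -> nablaE g u Z x y = 0.
Proof. by move=> H; rewrite /nablaE big1 // => i _; rewrite H scale0r. Qed.

Lemma a_Dop f i : g (Dop u z f) (u i) = 0.
Proof. by rewrite /Dop gsuml big1 // => j _; rewrite gZl Hiso mulr0. Qed.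

Lemma Dcirc f e2 : circE g u Z (Dop u z f) e2 = 0.
Proof.
rewrite circ_NT N_iso; last exact: a_Dop.
rewrite /T /Dop WZU sub0r antisym ?oppr0 // => [i j|i j]; first exact: WC.
set w := W _ _ _.
have -> : \sum_(k < n) C i j k * z k f + z i (z j f) - (\sum_(k < n) C j i k * z k f + z j (z i f))
  = z i (z j f) - z j (z i f) - \sum_(k < n) (C j i k - C i j k) * z k f.
  have -> : \sum_(k < n) (C j i k - C i j k) * z k f
      = \sum_(k < n) C j i k * z k f - \sum_(k < n) C i j k * z k f.
    by rewrite -sumrB; apply: eq_bigr => k _; rewrite mulrBl.
  ring.
exact: zcomm.
Qed.


Lemma bundle : bundle_map (anchorE g u z).
Proof.
rewrite /bundle_map; split.
- move=> e; rewrite /is_vector_field; split.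
  + move=> f h; rewrite /anchorE -big_split; apply: eq_bigr => i _ /=.
    by rewrite zD mulrDr.
  + move=> c f; rewrite /anchorE scaler_sumr; apply: eq_bigr => i _.
    by rewrite zZ scalerAr.
  + move=> f h; rewrite /anchorE mulr_sumr mulr_suml -big_split; apply: eq_bigr => i _ /=.
    rewrite zM; ring.
- move=> e1 e2 f; rewrite /anchorE -big_split; apply: eq_bigr => i _ /=.
  by rewrite gDl mulrDl.
- move=> h e f; rewrite /anchorE mulr_sumr; apply: eq_bigr => i _.
  by rewrite gZl mulrA.
Qed.

Lemma rbil : R_bilinear (circE g u Z).
Proof.
rewrite /R_bilinear; split.
- move=> e1 e2 e3; rewrite !circ_NT.
  have -> : nablaE g u Z (e1 + e2) e3 = nablaE g u Z e1 e3 + nablaE g u Z e2 e3.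
    by rewrite /nablaE -big_split; apply: eq_bigr => i _; rewrite gDl scalerDl.
  have -> : T (e1 + e2) e3 = T e1 e3 + T e2 e3.
    by rewrite /T -big_split; apply: eq_bigr => i _; rewrite ZD WDr.
  zc.
- move=> e1 e2 e3; rewrite !circ_NT.
  have -> : nablaE g u Z e1 (e2 + e3) = nablaE g u Z e1 e2 + nablaE g u Z e1 e3.
    exact: (ZsD (a e1) e2 e3).
  rewrite TDt; zc.
- move=> c e1 e2; rewrite !circ_NT.
  have -> : nablaE g u Z (c%:A *: e1) e2 = c%:A *: nablaE g u Z e1 e2.
    by rewrite /nablaE scaler_sumr; apply: eq_bigr => i _; rewrite gZl scalerA.
  have -> : T (c%:A *: e1) e2 = c%:A *: T e1 e2.
    by rewrite /T scaler_sumr; apply: eq_bigr => i _; rewrite ZR WZr.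
  by rewrite scalerBr.
- move=> c e1 e2; rewrite !circ_NT.
  have -> : nablaE g u Z e1 (c%:A *: e2) = c%:A *: nablaE g u Z e1 e2.
    by rewrite /nablaE scaler_sumr; apply: eq_bigr => i _; rewrite ZR !scalerA mulrC.
  by rewrite TZt scalerBr.
Qed.

Lemma Danch f e : g (Dop u z f) e = anchorE g u z e f.
Proof.
by rewrite /Dop /anchorE gsuml; apply: eq_bigr => i _; rewrite gZl gC mulrC.
Qed.

Lemma ax_i e h1 h2 :
  anchorE g u z e (g h1 h2) = g (circE g u Z e h1) h2 + g h1 (circE g u Z e h2).
Proof.
have HM : \sum_(i < n) g e (u i) * z i (g h1 h2)
   = g (nablaE g u Z e h1) h2 + g h1 (nablaE g u Z e h2) := Zs_met (a e) h1 h2.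
rewrite /anchorE HM !circ_NT gBl gBr gT opprK; zc.
Qed.

Lemma ax_ii e : circE g u Z e e = ((2 : R)^-1)%:A *: Dop u z (g e e).
Proof.
rewrite /circE subrr add0r /DeltaE /Dop scaler_sumr; apply: eq_bigr => i _.
by rewrite -Hmet (gC e (Z i e)) scalerA halfA.
Qed.

End Prop313.

Unset Implicit Arguments.
Set Strict Implicit.

Theorem proposition3p13 (R : realFieldType) (A : comAlgType R) (V : lmodType A)
    (n : nat) (g : V -> V -> A) (u : 'I_n -> V)
    (Z : 'I_n -> V -> V) (z : 'I_n -> A -> A) (C : 'I_n -> 'I_n -> 'I_n -> A) :
  pseudo_metric g ->
  (* u^1, ..., u^n linearly independent over C^oo(M) *)
  (forall c : 'I_n -> A, \sum_(i < n) c i *: u i = 0 -> forall i, c i = 0) ->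
  (forall i, is_cdo (Z i) (z i)) ->
  (forall i e1 e2, g (Z i e1) e2 + g e1 (Z i e2) = z i (g e1 e2)) ->
  (* C i k j stands for C_{ik}^j *)
  (forall i j, Z i (u j) = \sum_(k < n) C i k j *: u k) ->
  (forall i j, g (u i) (u j) = 0) ->
  (forall i j e, Z i (Z j e) - Z j (Z i e) = \sum_(k < n) (C j i k - C i j k) *: Z k e) ->
  (forall e1 e2 e3 : V,
     let nabla := nablaE g u Z in
     let br := circE g u Z in
     [/\ courant_curv nabla br e1 e2 e3 = 0,
         nabla (DeltaE g u Z e3 e2) e1 = 0,
         (forall t, Q_pair g nabla br e1 e2 e3 t = 0)
       & br (Dop u z (g e1 e3)) e2 = 0])
  /\ courant_algebroid g (circE g u Z) (anchorE g u z) (Dop u z).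
Proof.
move=> Hpm Hind Hcdo Hmet HZu Hiso Hcomm.
have c0 := curv0 Hpm Hcdo Hmet HZu Hiso Hcomm.
split.
  move=> e1 e2 e3 nabla br; rewrite /nabla /br; split.
  - exact: c0.
  - by apply: N_iso => i; exact: (aDelta Z Hpm Hiso).
  - by move=> t; rewrite /Q_pair !c0 !(g0l Hpm) !addr0.
  - exact: (Dcirc Hpm Hcdo HZu Hiso Hcomm).
split; first exact: Hpm.
split; first exact: (bundle u Hpm Hcdo).
split; first exact: (rbil u Hpm Hcdo).
split; first exact: (Danch u z Hpm).
split; first exact: (ax_i u Hpm Hmet).
split; first exact: (ax_ii u Hpm Hmet).
exact: (jacobi Hpm Hcdo Hmet HZu Hiso Hcomm).
Qed.
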